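(* In the three-point self-training loop with $\Gamma=\infty$, fix a period $t$ with symmetric prior $\pi_t(-\bar\theta)=\pi_t(\bar\theta)=(1-p_t)/2$, $\pi_t(0)=p_t\in[0,1)$, and suppose the users use signals $\sigma_t(0)=\infty$ and $\sigma_t(-\bar\theta)=\sigma_t(\bar\theta)=\sigma\in(0,\infty)$ (held fixed). Then the next-period mass at zero $p_{t+1}=\pi_{t+1}(0)=\mathbb P(\theta^\star_t=0)$ is (1) strictly increasing in $p_t$, and (2) strictly increasing in $\sigma$. Equivalently, since $\mathrm{Var}(\theta^\star_t)=\bar\theta^2(1-p_{t+1})$ and $\mathrm{Var}$ of the prior $\pi_t$ is $\bar\theta^2(1-p_t)$, the output variance at period $t$ is strictly increasing in the variance of the period-$t$ prior and strictly decreasing in $\sigma$.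
   Context: Three-point self-training loop. Fix $\bar\theta>0$, $p_0\in(0,1)$, $\gamma>0$, $\Gamma\in(0,\infty]$. Population preferences $\theta$ take values in $\Theta=\{-\bar\theta,0,\bar\theta\}$ with $\pi_T(-\bar\theta)=\pi_T(\bar\theta)=(1-p_0)/2$, $\pi_T(0)=p_0$. Set $\pi_0=\pi_T$. At period $t$ the AI prior $\pi_t$ is a distribution on $\Theta$. A user of type $\theta$ uses a signal level $\sigma\in[0,\infty]$; the AI observes $s=\theta+\varepsilon$, $\varepsilon\sim N(0,\sigma^2)$, forms the Bayesian posterior $\pi_t(\cdot\mid s)$ (Gaussian likelihood; the prior itself if $\sigma=\infty$), and outputs $\theta_{A,t}(s,\sigma)\in\arg\min_{\hat\theta\in\Theta}\sum_{\vartheta\in\Theta}(\hat\theta-\vartheta)^2\pi_t(\vartheta\mid s)$. With $\Gamma=\infty$ every user uses the AI, so the output is $\theta^\star_t=\theta_{A,t}(s,\sigma_t(\theta))$ with $s\sim N(\theta,\sigma_t(\theta)^2)$, and the next prior is $\pi_{t+1}(\vartheta)=\mathbb P(\theta^\star_t=\vartheta)$ with $\theta\sim\pi_T$. *)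

(* Defs.v *)
From HB Require Import structures.
From mathcomp Require Import all_boot all_order all_algebra.
From mathcomp Require Import all_classical all_reals all_analysis.
Set Implicit Arguments. Unset Strict Implicit. Unset Printing Implicit Defensive.
Import Order.TTheory GRing.Theory Num.Theory.
Local Open Scope classical_set_scope.
Local Open Scope ring_scope.

Inductive pt := Neg | Zero | Pos.

Definition pt_eqb (x y : pt) : bool :=
  match x, y with Neg, Neg | Zero, Zero | Pos, Pos => true | _, _ => false end.

Definition pt_enum : seq pt := [:: Neg; Zero; Pos].

Section Model.
Variable R : realType.
Variable thb : R.

Definition pval (x : pt) : R :=
  match x with Neg => - thb | Zero => 0 | Pos => thb end.

(* A distribution on Theta is a weight function pt -> R. *)
Definition sym_prior (p : R) (x : pt) : R :=
  match x with Zero => p | _ => (1 - p) / 2 end.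

(* Signal level in (0, oo] : [Some s] is a finite level s, [None] is oo. *)
Definition siglevel := option R.

Definition posterior (pri : pt -> R) (sig : siglevel) (s : R) (x : pt) : R :=
  match sig with
  | None => pri x
  | Some sg =>
      pri x * normal_pdf (pval x) sg s /
      \sum_(y <- pt_enum) pri y * normal_pdf (pval y) sg s
  end.

Definition risk (post : pt -> R) (h : pt) : R :=
  \sum_(y <- pt_enum) (pval h - pval y) ^+ 2 * post y.

(* AI output: a minimiser of the posterior risk over Theta.
   Tie-breaking convention (ties have probability zero): prefer 0, then -thb. *)
Definition argmin_out (post : pt -> R) : pt :=
  if (risk post Zero <= risk post Neg) && (risk post Zero <= risk post Pos)
  then Zero
  else if risk post Neg <= risk post Pos then Neg else Pos.

Definition ai_output (pri : pt -> R) (sig : siglevel) (s : R) : pt :=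
  argmin_out (posterior pri sig s).

Definition out_prob (pri : pt -> R) (sig : siglevel) (theta v : pt) : \bar R :=
  match sig with
  | None => (if pt_eqb (ai_output pri None 0) v then 1 else 0)%:E
  | Some sg => normal_prob (pval theta) sg [set s | ai_output pri sig s = v]
  end.

(* Next-period prior (Gamma = oo): pi_{t+1}(v) = P(theta*_t = v), theta ~ piT. *)
Definition next_prior (piT pit : pt -> R) (sigt : pt -> siglevel) (v : pt)
  : \bar R :=
  (\sum_(th <- pt_enum) (piT th)%:E * out_prob pit (sigt th) th v)%E.

Definition sig_profile (sg : R) (x : pt) : siglevel :=
  match x with Zero => None | _ => Some sg end.

Definition p_next (p0 pt0 sg : R) : \bar R :=
  next_prior (sym_prior p0) (sym_prior pt0) (sig_profile sg) Zero.

End Model.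

(* Main.v *)
Require Import Defs.
From HB Require Import structures.
From mathcomp Require Import all_boot all_order all_algebra.
From mathcomp Require Import all_classical all_reals all_analysis.
From mathcomp Require Import ring lra.
Import Order.TTheory GRing.Theory Num.Theory.
Import numFieldNormedType.Exports.
Local Open Scope classical_set_scope.
Local Open Scope ring_scope.

Section S.
Context {R : realType}.
Notation mu := (@lebesgue_measure R).
Definition phi (z : R) := normal_pdf 0 1 z.
Definition Phi (z : R) : R := Rintegral mu [set` Interval -oo%O (BRight z)] phi.

Lemma phi_gt0 (z : R) : 0 < phi z.
Proof.
rewrite /phi /normal_pdf oner_eq0 mulr_gt0 ?normal_peak_gt0 ?oner_eq0//.
exact: expR_gt0.
Qed.

Lemma phi_cont : continuous phi.
Proof. exact: continuous_normal_pdf (oner_neq0 R). Qed.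

Lemma Phi_derive (z : R) : is_derive z 1 Phi (phi z).
Proof.
have [] := @continuous_FTC1 R phi -oo%O z (z + 1) _ _ _ _.
- by rewrite ltrDl.
- apply: integrableS (integrable_normal_pdf 0 1) => //; exact: subsetT.
- by rewrite ltNyr.
- exact: phi_cont.
move=> d e; apply: DeriveDef => //.
by rewrite -derive1E e.
Qed.
Lemma der_cont (f : R -> R) (x : R) : derivable f x 1 -> {for x, continuous f}.
Proof. by move=> d; apply: differentiable_continuous; apply/derivable1_diffP. Qed.

Lemma der_LR (f : R -> R) a b : (forall x : R, derivable f x 1) ->
  derivable_oo_LRcontinuous f a b.
Proof.
move=> d; split.
- by move=> x _; exact: d.
- by apply: cvg_at_right_filter; exact: der_cont.
- by apply: cvg_at_left_filter; exact: der_cont.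
Qed.

Lemma der_incr (f df : R -> R) x y : (forall z : R, is_derive z 1 f (df z)) ->
  (forall z, x < z < y -> 0 < df z) -> x < y -> f x < f y.
Proof.
move=> D pos xy.
apply: (@gtr0_derive1_incr R f x y _ _ _ x y) => //.
- move=> z; rewrite in_itv/= => zi.
  by rewrite derive1E (@derive_val _ _ _ _ _ _ _ (D z)) pos.
- by apply: derivable_within_continuous => z _; have [] := D z.
Qed.


Lemma pdf_eq (m sg x : R) : 0 < sg ->
  phi ((x - m) / sg) * sg^-1 = normal_pdf m sg x.
Proof.
move=> sg0.
rewrite /phi /normal_pdf oner_eq0 gt_eqF //.
rewrite mulrAC; congr (_ * _).
  rewrite /normal_peak expr1n mul1r -invfM; congr (_^-1).
  rewrite -mulrnAr sqrtrM ?sqr_ge0// sqrtr_sqr gtr0_norm// mulrC.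
  done.
rewrite /normal_fun; congr expR.
rewrite subr0 expr1n; field.
by rewrite gt_eqF.
Qed.

Lemma aff_derive (m sg x : R) : is_derive x 1 (fun y : R => (y - m) / sg) sg^-1.
Proof.
apply: is_derive_eq.
by rewrite scaler0 add0r subr0 /GRing.scale/= mulr1.
Qed.

Lemma normal_prob_itv (m sg a b : R) : 0 < sg -> a < b ->
  normal_prob m sg `[a, b] = (Phi ((b - m) / sg) - Phi ((a - m) / sg))%:E.
Proof.
move=> sg0 ab.
have D : forall x : R, is_derive x 1 (fun y => Phi ((y - m) / sg)) (normal_pdf m sg x).
  move=> x; rewrite -pdf_eq//.
  exact: (@is_derive1_comp R Phi (fun y => (y - m) / sg) x _ _ (Phi_derive _) (aff_derive m sg x)).
rewrite /normal_prob (@continuous_FTC2 R _ (fun y => Phi ((y - m) / sg)))//.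
- apply: continuous_subspaceT => x.
  have := @continuous_normal_pdf R m sg (lt0r_neq0 sg0) x; exact.
- apply: (@der_LR (fun y : R => Phi ((y - m) / sg))) => x; have [] := D x; done.
- by move=> x _; rewrite derive1E (@derive_val _ _ _ _ _ _ _ (D x)).
Qed.
Definition uu (r : R) := (r + Num.sqrt (r ^+ 2 + 12)) / 2.

Lemma sqrt_facts (r : R) : 0 <= r ->
  let S := Num.sqrt (r ^+ 2 + 12) in S ^+ 2 = r ^+ 2 + 12 /\ r < S /\ 0 <= S.
Proof.
move=> r0 S; have h : 0 <= r ^+ 2 + 12 by rewrite addr_ge0 ?sqr_ge0.
have e : S ^+ 2 = r ^+ 2 + 12 by rewrite sqr_sqrtr.
have S0 : 0 <= S by exact: sqrtr_ge0.
split => //; split => //.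
have : r ^+ 2 < S ^+ 2 by rewrite e; lra.
by rewrite ltr_pXn2r ?qualifE.
Qed.

Lemma uu_gt1 (r : R) : 0 <= r -> 1 < uu r.
Proof.
move=> r0; have [e [rS S0]] := sqrt_facts r r0; rewrite /uu.
set S := Num.sqrt _ in e rS S0 *.
have h4 : 4 < S ^+ 2 by rewrite e; nra.
nra.
Qed.

Lemma quad_le (r t : R) : 0 <= r -> 0 < t ->
  (t ^+ 2 - r * t - 3 <= 0) = (t <= uu r).
Proof.
move=> r0 t0; have [e [rS S0]] := sqrt_facts r r0; rewrite /uu.
set S := Num.sqrt _ in e rS S0 *.
have Ef : t ^+ 2 - r * t - 3 = (t - (r + S) / 2) * (t - (r - S) / 2).
  have -> : (3:R) = (S ^+ 2 - r ^+ 2) / 4 by rewrite e; field.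
  by field.
rewrite Ef; apply/idP/idP => h.
- have p : 0 < t - (r - S) / 2 by lra.
  by move: h; rewrite pmulr_lle0 // subr_le0.
- have p : 0 < t - (r - S) / 2 by lra.
  nra.
Qed.

Lemma quad_exp (r y : R) : 0 <= r ->
  (expR y ^+ 2 - r * expR y - 3 <= 0) = (y <= ln (uu r)).
Proof.
move=> r0; rewrite quad_le ?expR_gt0//.
have u0 : 0 < uu r by have := uu_gt1 r r0; lra.
by rewrite -{1}(lnK u0) ler_expR.
Qed.

Definition rr (thb p sg : R) := p / ((1 - p) / 2) * expR (thb ^+ 2 / (sg ^+ 2 *+ 2)).
Definition kk (thb p sg : R) := sg ^+ 2 * ln (uu (rr thb p sg)) / thb.

Lemma risk_ZN (thb : R) post :
  risk thb post Zero - risk thb post Neg =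
  thb ^+ 2 * (post Neg - post Zero - 3 * post Pos).
Proof. rewrite /risk /pt_enum !big_cons !big_nil /=; ring. Qed.

Lemma risk_ZP (thb : R) post :
  risk thb post Zero - risk thb post Pos =
  thb ^+ 2 * (post Pos - post Zero - 3 * post Neg).
Proof. rewrite /risk /pt_enum !big_cons !big_nil /=; ring. Qed.

Lemma post_expr (thb p sg s : R) : 0 < sg -> 0 <= p < 1 ->
  let q := (1 - p) / 2 in
  let c := q * normal_peak sg * expR (- (s ^+ 2 + thb ^+ 2) / (sg ^+ 2 *+ 2)) in
  let y := s * thb / sg ^+ 2 in
  let post := posterior thb (sym_prior p) (Some sg) s in
  let Z := \sum_(x <- pt_enum) sym_prior p x * normal_pdf (pval thb x) sg s in
  [/\ 0 < Z, 0 < c,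
      post Neg = c * expR (- y) / Z,
      post Pos = c * expR y / Z &
      post Zero = c * rr thb p sg / Z].
Proof.
move=> sg0 /andP[p0 p1] q c y post Z.
have q0 : 0 < q by rewrite /q; lra.
have pk : 0 < normal_peak sg by apply: normal_peak_gt0; rewrite gt_eqF.
have c0 : 0 < c by rewrite /c; apply: mulr_gt0; [apply: mulr_gt0|apply: expR_gt0].
have pdfE x : normal_pdf (pval thb x) sg s =
    normal_peak sg * normal_fun (pval thb x) sg s.
  by rewrite /normal_pdf gt_eqF.
have eN : normal_fun (pval thb Neg) sg s =
   expR (- (s ^+ 2 + thb ^+ 2) / (sg ^+ 2 *+ 2)) * expR (- y).
  rewrite /normal_fun -expRD; congr expR; rewrite /y /=; field; by rewrite gt_eqF.
have eP : normal_fun (pval thb Pos) sg s =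
   expR (- (s ^+ 2 + thb ^+ 2) / (sg ^+ 2 *+ 2)) * expR y.
  rewrite /normal_fun -expRD; congr expR; rewrite /y /=; field; by rewrite gt_eqF.
have eZ : normal_fun (pval thb Zero) sg s =
   expR (- (s ^+ 2 + thb ^+ 2) / (sg ^+ 2 *+ 2)) * expR (thb ^+ 2 / (sg ^+ 2 *+ 2)).
  rewrite /normal_fun -expRD; congr expR; rewrite /=; field; by rewrite gt_eqF.
have hN : sym_prior p Neg * normal_pdf (pval thb Neg) sg s = c * expR (- y).
  by rewrite pdfE eN /c /=; rewrite -/q; ring.
have hP : sym_prior p Pos * normal_pdf (pval thb Pos) sg s = c * expR y.
  by rewrite pdfE eP /c /=; rewrite -/q; ring.
have hZ : sym_prior p Zero * normal_pdf (pval thb Zero) sg s = c * rr thb p sg.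
  rewrite pdfE eZ /c /rr /=; rewrite -/q; field; rewrite /q; lra.
have Z0 : 0 < Z.
  rewrite /Z /pt_enum !big_cons big_nil hN hP hZ addr0.
  have : 0 <= rr thb p sg by rewrite /rr mulr_ge0 ?expR_ge0 ?divr_ge0//; lra.
  have := expR_gt0 y; have := expR_gt0 (- y); nra.
split => //.
- by rewrite /post /posterior hN.
- by rewrite /post /posterior hP.
- by rewrite /post /posterior hZ.
Qed.

Lemma rr_ge0 (thb p sg : R) : 0 <= p < 1 -> 0 <= rr thb p sg.
Proof. by move=> /andP[p0 p1]; rewrite /rr mulr_ge0 ?expR_ge0 ?divr_ge0//; lra. Qed.

Lemma ai_zero (thb p sg s : R) : 0 < thb -> 0 < sg -> 0 <= p < 1 ->
  (ai_output thb (sym_prior p) (Some sg) s = Zero) <->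
  (- kk thb p sg <= s <= kk thb p sg).
Proof.
move=> thb0 sg0 hp.
have [Z0 c0 eN eP eZ] := post_expr thb p sg s sg0 hp.
set post := posterior _ _ _ _ in eN eP eZ.
set Z := \sum_(x <- _) _ in Z0 eN eP eZ.
set c := _ * _ * expR _ in c0 eN eP eZ.
set y := s * thb / sg ^+ 2 in eN eP eZ.
set r := rr thb p sg in eZ.
have r0 : 0 <= r by exact: rr_ge0.
have t0 : 0 < thb ^+ 2 by rewrite exprn_gt0.
have s20 : 0 < sg ^+ 2 by rewrite exprn_gt0.
have e1 := expRxMexpNx_1 y.
have c1 : (risk thb post Zero <= risk thb post Neg) = (- kk thb p sg <= s).
  rewrite -subr_le0 risk_ZN eN eP eZ.
  have -> : c * expR (- y) / Z - c * r / Z - 3 * (c * expR y / Z) =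
     (c * expR y / Z) * (expR (- y) ^+ 2 - r * expR (- y) - 3).
    rewrite -[in LHS](mul1r (expR (- y))) -[in LHS](mul1r r) -e1.
    field; by rewrite gt_eqF.
  have cy : 0 < c * expR y / Z by rewrite divr_gt0 // mulr_gt0 // expR_gt0.
  rewrite pmulr_rle0 // pmulr_rle0 //.
  rewrite quad_exp // /kk -/r.
  set L := ln _.
  have h1 : (- y <= L) = (- (s * thb) <= L * sg ^+ 2).
    by rewrite -(ler_pM2r s20); congr (_ <= _); rewrite /y; field; rewrite gt_eqF.
  have h2 : (- (sg ^+ 2 * L / thb) <= s) = (- (sg ^+ 2 * L) <= s * thb).
    by rewrite -(ler_pM2r thb0); congr (_ <= _); field; rewrite gt_eqF.
  rewrite h1 h2; apply/idP/idP => h; lra.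
have c2 : (risk thb post Zero <= risk thb post Pos) = (s <= kk thb p sg).
  rewrite -subr_le0 risk_ZP eN eP eZ.
  have -> : c * expR y / Z - c * r / Z - 3 * (c * expR (- y) / Z) =
     (c * expR (- y) / Z) * (expR y ^+ 2 - r * expR y - 3).
    rewrite -[in LHS](mul1r (expR y)) -[in LHS](mul1r r) -e1.
    field; by rewrite gt_eqF.
  have cy : 0 < c * expR (- y) / Z by rewrite divr_gt0 // mulr_gt0 // expR_gt0.
  rewrite pmulr_rle0 // pmulr_rle0 //.
  rewrite quad_exp // /kk -/r.
  set L := ln _.
  have h1 : (y <= L) = (s * thb <= L * sg ^+ 2).
    by rewrite -(ler_pM2r s20); congr (_ <= _); rewrite /y; field; rewrite gt_eqF.
  have h2 : (s <= sg ^+ 2 * L / thb) = (s * thb <= sg ^+ 2 * L).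
    by rewrite -(ler_pM2r thb0); congr (_ <= _); field; rewrite gt_eqF.
  rewrite h1 h2; apply/idP/idP => h; lra.
rewrite /ai_output /argmin_out -/post c1 c2.
case: ifP => h; first by split.
split; last by move=> h'; rewrite h' in h.
by case: ifP.
Qed.
End S.

Section S3.
Context {R : realType}.

Lemma D_h (t s : R) : 0 < s ->
  is_derive s 1 (fun x : R => t / (x ^+ 2 *+ 2)) (- t / s ^+ 3).
Proof.
move=> s0.
have g : is_derive s 1 (fun x : R => x ^+ 2 *+ 2) ((s *+ 2) *+ 2).
  apply: is_derive_eq. by rewrite /GRing.scale /= mulr1 -!mulr2n.
have nz : s ^+ 2 *+ 2 != 0 by rewrite gt_eqF // mulrn_wgt0 // exprn_gt0.
have iv := @is_deriveV R (fun x : R => x ^+ 2 *+ 2) s _ 1 nz g.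
apply: is_derive_eq.
rewrite /GRing.scale /=; field.
by rewrite gt_eqF.
Qed.

Lemma D_r (thb p s : R) : 0 < s ->
  is_derive s 1 (fun x : R => rr thb p x) (rr thb p s * (- thb ^+ 2 / s ^+ 3)).
Proof.
move=> s0.
have h := D_h (thb ^+ 2) s s0.
have e := @is_derive1_comp R expR (fun x : R => thb ^+ 2 / (x ^+ 2 *+ 2)) s _ _ (is_derive_expR _) h.
rewrite /rr; apply: is_derive_eq.
by rewrite /GRing.scale /= mulrA.
Qed.

Definition Sq (r : R) := Num.sqrt (r ^+ 2 + 12).

Lemma D_S (thb p s : R) : 0 < s ->
  is_derive s 1 (fun x : R => Num.sqrt (rr thb p x ^+ 2 + 12))
    ((2 * Num.sqrt (rr thb p s ^+ 2 + 12))^-1 * (2 * rr thb p s * (rr thb p s * (- thb ^+ 2 / s ^+ 3)))).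
Proof.
move=> s0.
have h := D_r thb p s s0.
have g : is_derive s 1 (fun x : R => rr thb p x ^+ 2 + 12)
     (2 * rr thb p s * (rr thb p s * (- thb ^+ 2 / s ^+ 3))).
  by apply: is_derive_eq; rewrite /GRing.scale /= addr0 -[RHS]mulrA mulr_natl mulr2n.
have pos : 0 < rr thb p s ^+ 2 + 12 by rewrite ltr_wpDl ?sqr_ge0.
exact: (@is_derive1_comp R Num.sqrt (fun x : R => rr thb p x ^+ 2 + 12) s _ _
  (is_derive1_sqrt pos) g).
Qed.

Lemma D_u (thb p s : R) : 0 < s ->
  is_derive s 1 (fun x : R => uu (rr thb p x))
    ((rr thb p s * (- thb ^+ 2 / s ^+ 3) +
      (2 * Num.sqrt (rr thb p s ^+ 2 + 12))^-1 * (2 * rr thb p s * (rr thb p s * (- thb ^+ 2 / s ^+ 3)))) / 2).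
Proof.
move=> s0; have h1 := D_r thb p s s0; have h2 := D_S thb p s s0.
rewrite /uu; apply: is_derive_eq.
by rewrite !scaler0 add0r /GRing.scale /= mulrC.
Qed.

Lemma D_L (thb p s : R) : 0 < s -> 0 <= p < 1 ->
  is_derive s 1 (fun x : R => ln (uu (rr thb p x)))
    ((uu (rr thb p s))^-1 * ((rr thb p s * (- thb ^+ 2 / s ^+ 3) +
      (2 * Num.sqrt (rr thb p s ^+ 2 + 12))^-1 * (2 * rr thb p s * (rr thb p s * (- thb ^+ 2 / s ^+ 3)))) / 2)).
Proof.
move=> s0 hp; have h := D_u thb p s s0.
have pos : 0 < uu (rr thb p s) by have := uu_gt1 _ (rr_ge0 thb p s hp); lra.
have := (@is_derive1_comp R (@ln R) (fun x : R => uu (rr thb p x)) s _ _ (is_derive1_ln pos) h). done.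
Qed.

Lemma D_b (thb s : R) : 0 < s -> is_derive s 1 (fun x : R => thb / x) (- thb / s ^+ 2).
Proof.
move=> s0.
have iv := @is_deriveV R id s 1 1 (lt0r_neq0 s0) (is_derive_id s 1).
apply: is_derive_eq; rewrite /GRing.scale /=; field; by rewrite gt_eqF.
Qed.

Definition rd (thb p s : R) := rr thb p s * (- thb ^+ 2 / s ^+ 3).
Definition Ld (thb p s : R) := (uu (rr thb p s))^-1 * ((rd thb p s +
      (2 * Num.sqrt (rr thb p s ^+ 2 + 12))^-1 * (2 * rr thb p s * rd thb p s)) / 2).
Definition Lf (thb p x : R) := ln (uu (rr thb p x)).
Definition af (thb p x : R) := x * Lf thb p x / thb.
Definition ad (thb p s : R) := (Lf thb p s + s * Ld thb p s) / thb.
Definition bd (thb s : R) := - thb / s ^+ 2.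

Lemma D_a (thb p s : R) : 0 < s -> 0 <= p < 1 ->
  is_derive s 1 (af thb p) (ad thb p s).
Proof.
move=> s0 hp; have h : is_derive s 1 (Lf thb p) (Ld thb p s) by exact: D_L.
rewrite /af; apply: is_derive_eq.
by rewrite scaler0 add0r /ad /GRing.scale /= mulr1 mulrC addrC.
Qed.

Definition HP (thb p x : R) := Phi (af thb p x - thb / x) - Phi (- af thb p x - thb / x).
Definition HN (thb p x : R) := Phi (af thb p x + thb / x) - Phi (thb / x - af thb p x).

Lemma D_HP (thb p s : R) : 0 < s -> 0 <= p < 1 ->
  is_derive s 1 (HP thb p)
   (phi (af thb p s - thb / s) * (ad thb p s - bd thb s) -
    phi (- af thb p s - thb / s) * (- ad thb p s - bd thb s)).
Proof.
move=> s0 hp; have ha := D_a thb p s s0 hp; have hb := D_b thb s s0.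
have g1 : is_derive s 1 (fun x => af thb p x - thb / x) (ad thb p s - bd thb s).
  by apply: is_derive_eq.
have g2 : is_derive s 1 (fun x => - af thb p x - thb / x) (- ad thb p s - bd thb s).
  by apply: is_derive_eq.
have k1 := @is_derive1_comp R Phi _ s _ _ (Phi_derive _) g1.
have k2 := @is_derive1_comp R Phi _ s _ _ (Phi_derive _) g2.
by rewrite /HP; apply: is_derive_eq.
Qed.

Lemma D_HN (thb p s : R) : 0 < s -> 0 <= p < 1 ->
  is_derive s 1 (HN thb p)
   (phi (af thb p s + thb / s) * (ad thb p s + bd thb s) -
    phi (thb / s - af thb p s) * (bd thb s - ad thb p s)).
Proof.
move=> s0 hp; have ha := D_a thb p s s0 hp; have hb := D_b thb s s0.
have g1 : is_derive s 1 (fun x => af thb p x + thb / x) (ad thb p s + bd thb s).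
  by apply: is_derive_eq.
have g2 : is_derive s 1 (fun x => thb / x - af thb p x) (bd thb s - ad thb p s).
  by apply: is_derive_eq.
have k1 := @is_derive1_comp R Phi _ s _ _ (Phi_derive _) g1.
have k2 := @is_derive1_comp R Phi _ s _ _ (Phi_derive _) g2.
by rewrite /HN; apply: is_derive_eq.
Qed.
End S3.

Section S4.
Context {R : realType}.

Lemma phiN (z : R) : phi (- z) = phi z.
Proof. by rewrite /phi /normal_pdf oner_eq0 /normal_fun !subr0 sqrrN. Qed.

Lemma phi_shift (a b L : R) : a * b = L ->
  phi (a - b) = phi (a + b) * expR L ^+ 2.
Proof.
move=> ab; rewrite /phi /normal_pdf oner_eq0 /normal_fun -mulrA; congr (_ * _).
rewrite [expR L ^+ 2]expr2 -!expRD; congr expR; rewrite !subr0 -ab; by field.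
Qed.

Lemma deriv_pos (thb p s : R) : 0 < thb -> 0 < s -> 0 <= p < 1 ->
  0 < phi (af thb p s - thb / s) * (ad thb p s - bd thb s) +
      phi (af thb p s + thb / s) * (ad thb p s + bd thb s).
Proof.
move=> t0 s0 hp.
have r0 : 0 <= rr thb p s := rr_ge0 thb p s hp.
have [e [rS S0]] := sqrt_facts (rr thb p s) r0.
set r := rr thb p s in r0 e rS S0.
set S := Num.sqrt _ in e rS S0.
have u1 : 1 < uu r := uu_gt1 r r0.
have L0 : 0 < Lf thb p s by apply: ln_gt0.
set L := Lf thb p s in L0.
have uE : uu r = expR L by rewrite /L /Lf lnK // posrE; lra.
have Spos : 0 < S by lra.
have ead : ad thb p s = L / thb - r / S * (thb / s ^+ 2).
  rewrite /ad /Ld /rd -/r -/L /uu -/S; field.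
  by rewrite (gt_eqF s0) (gt_eqF Spos) (gt_eqF t0) gt_eqF //; lra.
have ab : af thb p s * (thb / s) = L by rewrite /af -/L; field; rewrite (gt_eqF s0) gt_eqF.
rewrite (phi_shift _ _ _ ab) -uE ead /bd.
have P0 := phi_gt0 (af thb p s + thb / s).
set P := phi _ in P0 *.
have key : uu r ^+ 2 * (1 - r / S) = 3 * (1 + r / S).
  apply/eqP; rewrite -subr_eq0; apply/eqP.
  have -> : uu r ^+ 2 * (1 - r / S) - 3 * (1 + r / S) = (r + S) * (S ^+ 2 - r ^+ 2 - 12) / (4 * S).
    by rewrite /uu -/S; field; rewrite gt_eqF.
  by rewrite e; rewrite [_ - 12](_ : _ = 0) ?mulr0 ?mul0r //; ring.
have T0 : 0 < thb / s ^+ 2 by rewrite divr_gt0 // exprn_gt0.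
have A0 : 0 < L / thb by rewrite divr_gt0.
have W0 : 0 <= r / S by rewrite divr_ge0.
set T := thb / s ^+ 2 in T0 *.
set A := L / thb in A0 *.
set W := r / S in W0 key *.
have -> : - thb / s ^+ 2 = - T by rewrite /T mulNr.
have -> : P * uu r ^+ 2 * (A - W * T - - T) + P * (A - W * T + - T) =
    P * ((uu r ^+ 2 + 1) * A + T * (uu r ^+ 2 * (1 - W) - (1 + W))) by ring.
rewrite key.
apply: mulr_gt0 => //; apply: addr_gt0.
  by apply: mulr_gt0 => //; rewrite ltr_pwDr // sqr_ge0.
apply: mulr_gt0 => //; lra.
Qed.
End S4.

Section S2.
Context {R : realType}.

Lemma Phi_lt (x y : R) : x < y -> Phi x < Phi y.
Proof.
move=> xy; apply: (@der_incr R Phi phi) => //.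
- exact: Phi_derive.
- by move=> z _; exact: phi_gt0.
Qed.

Lemma kk_gt0 (thb p sg : R) : 0 < thb -> 0 < sg -> 0 <= p < 1 -> 0 < kk thb p sg.
Proof.
move=> t0 s0 hp; rewrite /kk divr_gt0 // mulr_gt0 ?exprn_gt0 //.
by apply: ln_gt0; apply: uu_gt1; exact: rr_ge0.
Qed.

Lemma ai_none (thb p : R) : 0 < thb -> ai_output thb (sym_prior p) None 0 = Zero.
Proof.
move=> t0; rewrite /ai_output /argmin_out /risk /posterior /pt_enum !big_cons !big_nil /=.
have t2 : 0 < thb ^+ 2 by rewrite exprn_gt0.
rewrite ifT //; apply/andP; split; rewrite -subr_ge0.
- nra.
- nra.
Qed.


Definition GP (thb p sg : R) :=
  Phi ((kk thb p sg - thb) / sg) - Phi ((- kk thb p sg - thb) / sg).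
Definition GN (thb p sg : R) :=
  Phi ((kk thb p sg - - thb) / sg) - Phi ((- kk thb p sg - - thb) / sg).

Lemma zero_set (thb p sg : R) : 0 < thb -> 0 < sg -> 0 <= p < 1 ->
  [set s | ai_output thb (sym_prior p) (Some sg) s = Zero] =
  [set` `[- kk thb p sg, kk thb p sg]].
Proof.
move=> t0 s0 hp; apply/seteqP; split => s /=; rewrite in_itv /=.
- by move/(ai_zero thb p sg s t0 s0 hp).
- by move/(ai_zero thb p sg s t0 s0 hp).
Qed.

Lemma p_next_eq (thb p0 p sg : R) : 0 < thb -> 0 < sg -> 0 <= p < 1 ->
  p_next thb p0 p sg =
  ((1 - p0) / 2 * GN thb p sg + p0 + (1 - p0) / 2 * GP thb p sg)%:E.
Proof.
move=> t0 s0 hp.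
have k0 := kk_gt0 thb p sg t0 s0 hp.
have kk' : - kk thb p sg < kk thb p sg by lra.
rewrite /p_next /next_prior /pt_enum !big_cons !big_nil /=.
rewrite ai_none // /= zero_set // !normal_prob_itv //.
rewrite /GN /GP /= mule1 adde0 -!EFinM -!EFinD.
by rewrite addrA.
Qed.

Lemma rr_lt (thb sg p p' : R) : 0 <= p -> p < p' -> p' < 1 -> rr thb p sg < rr thb p' sg.
Proof.
move=> p0 pp p1; rewrite /rr ltr_pM2r ?expR_gt0 //.
have h1 : 0 < (1 - p) / 2 by lra.
have h2 : 0 < (1 - p') / 2 by lra.
rewrite ltr_pdivrMr // mulrAC ltr_pdivlMr //; nra.
Qed.

Lemma uu_lt (r r' : R) : 0 <= r -> r < r' -> uu r < uu r'.
Proof.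
move=> r0 rr'; rewrite /uu ltr_pM2r // ltr_leD //.
rewrite ler_sqrt ?addr_ge0 ?sqr_ge0 // lerD2r; nra.
Qed.

Lemma kk_lt (thb sg p p' : R) : 0 < thb -> 0 < sg -> 0 <= p -> p < p' -> p' < 1 ->
  kk thb p sg < kk thb p' sg.
Proof.
move=> t0 s0 p0 pp p1; rewrite /kk ltr_pM2r ?invr_gt0 // ltr_pM2l ?exprn_gt0 //.
have r0 : 0 <= rr thb p sg by apply: rr_ge0; rewrite p0 /=; lra.
have r0' : 0 <= rr thb p' sg by apply: rr_ge0; rewrite /=; apply/andP; split; lra.
rewrite ltr_ln ?posrE.
- by apply: uu_lt => //; exact: rr_lt.
- by have := uu_gt1 _ r0; lra.
- by have := uu_gt1 _ r0'; lra.
Qed.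

Lemma Phi_div_lt (a b sg : R) : 0 < sg -> a < b -> Phi (a / sg) < Phi (b / sg).
Proof. by move=> s0 ab; apply: Phi_lt; rewrite ltr_pM2r ?invr_gt0. Qed.

Lemma G_k_lt (m sg k k' : R) : 0 < sg -> k < k' ->
  Phi ((k - m) / sg) - Phi ((- k - m) / sg) <
  Phi ((k' - m) / sg) - Phi ((- k' - m) / sg).
Proof.
move=> s0 kk'.
have h1 := Phi_div_lt (k - m) (k' - m) sg s0 ltac:(lra).
have h2 := Phi_div_lt (- k' - m) (- k - m) sg s0 ltac:(lra).
lra.
Qed.

Lemma part1 (thb sg p p' : R) : 0 < thb -> 0 < sg -> 0 <= p -> p < p' -> p' < 1 ->
  GP thb p sg < GP thb p' sg /\ GN thb p sg < GN thb p' sg.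
Proof.
move=> t0 s0 p0 pp p1; have k := kk_lt thb sg p p' t0 s0 p0 pp p1.
by split; apply: G_k_lt.
Qed.
End S2.
Lemma comb_lt {R : realType} (c p0 a b a' b' : R) : 0 < c -> a < a' -> b < b' ->
  c * a + p0 + c * b < c * a' + p0 + c * b'.
Proof.
move=> c0 h1 h2; rewrite -subr_gt0.
have -> : c * a' + p0 + c * b' - (c * a + p0 + c * b) = c * (a' - a) + c * (b' - b) by ring.
by rewrite addr_gt0 // mulr_gt0 // subr_gt0.
Qed.


Section S5.
Context {R : realType}.

Lemma der_incr2 (f df : R -> R) (x y : R) :
  (forall z : R, x <= z <= y -> is_derive z 1 f (df z)) ->
  (forall z, x < z < y -> 0 < df z) -> x < y -> f x < f y.
Proof.
move=> D pos xy.
apply: (@gtr0_derive1_incr R f x y _ _ _ x y) => //.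
- move=> z; rewrite in_itv/= => /andP[h1 h2].
  by have [] := D z ltac:(apply/andP; split; lra).
- move=> z; rewrite in_itv/= => zi.
  have Dz := D z ltac:(move/andP: zi => [? ?]; apply/andP; split; lra).
  by rewrite derive1E (@derive_val _ _ _ _ _ _ _ Dz) pos.
- apply: derivable_within_continuous => z; rewrite in_itv/= => zi.
  by have [] := D z zi.
Qed.

Lemma HP_eq (thb p s : R) : 0 < thb -> 0 < s -> HP thb p s = GP thb p s.
Proof.
move=> t0 s0; rewrite /HP /GP /kk /af /Lf.
congr (Phi _ - Phi _); field; by rewrite !gt_eqF.
Qed.

Lemma HN_eq (thb p s : R) : 0 < thb -> 0 < s -> HN thb p s = GN thb p s.
Proof.
move=> t0 s0; rewrite /HN /GN /kk /af /Lf.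
congr (Phi _ - Phi _); field; by rewrite !gt_eqF.
Qed.

Lemma part2' (thb p sg sg' : R) : 0 < thb -> 0 <= p < 1 -> 0 < sg -> sg < sg' ->
  GP thb p sg < GP thb p sg' /\ GN thb p sg < GN thb p sg'.
Proof.
move=> t0 hp s0 ss.
have s0' : 0 < sg' by lra.
rewrite -(HP_eq thb p sg t0 s0) -(HP_eq thb p sg' t0 s0').
rewrite -(HN_eq thb p sg t0 s0) -(HN_eq thb p sg' t0 s0').
split.
- apply: (@der_incr2 _ (fun s => phi (af thb p s - thb / s) * (ad thb p s - bd thb s) -
    phi (- af thb p s - thb / s) * (- ad thb p s - bd thb s)) sg sg') => //.
  + move=> z /andP[z1 z2]; apply: D_HP => //; lra.
  + move=> z /andP[z1 z2].
    have := deriv_pos thb p z t0 ltac:(lra) hp.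
    by move=> h; rewrite -!opprD phiN mulrN opprK.
- apply: (@der_incr2 _ (fun s => phi (af thb p s + thb / s) * (ad thb p s + bd thb s) -
    phi (thb / s - af thb p s) * (bd thb s - ad thb p s)) sg sg') => //.
  + move=> z /andP[z1 z2]; apply: D_HN => //; lra.
  + move=> z /andP[z1 z2].
    have := deriv_pos thb p z t0 ltac:(lra) hp.
    by rewrite -[thb / z - _]opprB phiN -[bd _ _ - _]opprB mulrN opprK addrC.
Qed.
End S5.

Theorem mainTheorem16 (R : realType) (thb p0 : R)
  (hthb : 0 < thb) (hp0 : 0 < p0 < 1) :
  (* (1) strictly increasing in p_t, for fixed sigma in (0,oo) *)
  (forall sg pt pt' : R, 0 < sg -> 0 <= pt -> pt < pt' -> pt' < 1 ->
     (p_next thb p0 pt sg < p_next thb p0 pt' sg)%E) /\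
  (* (2) strictly increasing in sigma, for fixed p_t in [0,1) *)
  (forall pt sg sg' : R, 0 <= pt < 1 -> 0 < sg -> sg < sg' ->
     (p_next thb p0 pt sg < p_next thb p0 pt sg')%E).
Proof.
have c0 : 0 < (1 - p0) / 2 by case/andP: hp0 => ? ?; lra.
split.
- move=> sg p p' s0 hp pp p1.
  rewrite (p_next_eq thb p0 p sg hthb s0); last by rewrite hp /=; lra.
  rewrite (p_next_eq thb p0 p' sg hthb s0); last by apply/andP; split; lra.
  rewrite lte_fin; have [h1 h2] := part1 thb sg p p' hthb s0 hp pp p1.
  exact: comb_lt.
- move=> p sg sg' hp s0 ss.
  have s0' : 0 < sg' by lra.
  rewrite (p_next_eq thb p0 p sg hthb s0 hp) (p_next_eq thb p0 p sg' hthb s0' hp).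
  rewrite lte_fin; have [h1 h2] := part2' thb p sg sg' hthb hp s0 ss.
  exact: comb_lt.
Qed.
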